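(* Let $x\in\{0,1\}^*$ and let $Y\subseteq\{0,1\}^*$ be a finite nonempty set of words with $x\notin Y$. Then there is a $2^{|Y|}$-state AfA that accepts $x$ with probability $1$ and accepts every word of $Y$ with probability $0$.
   Context: An $n$-state affine finite automaton (AfA) over a finite alphabet $\Sigma$ consists of real $n\times n$ matrices $A_\sigma$ for $\sigma\in\Sigma\cup\{\$\}$ ($\$$ a right end-marker), each of whose columns sums to $1$; an initial vector $v_0\in\mathbb{R}^n$ with entries summing to $1$; and a set $E_a$ of accepting states. On input $w=w_1\cdots w_k$ the final vector is $v_f=A_\$A_{w_k}\cdots A_{w_1}v_0$, and $w$ is accepted with probability $\sum_{j\in E_a}|v_f[j]|\big/\sum_{j=1}^n|v_f[j]|$. *)

(* Defs.v *)
From HB Require Import structures.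
From mathcomp Require Import all_boot all_order all_algebra.
Set Implicit Arguments. Unset Strict Implicit. Unset Printing Implicit Defensive.
Import Order.TTheory GRing.Theory Num.Theory.
Local Open Scope ring_scope.

(* Input alphabet Sigma = {0,1} is [bool]; words are [seq bool].
   The extended alphabet Sigma ∪ {$} is [option bool], with [None] = $. *)
Definition word := seq bool.

Record afa (R : realFieldType) (n : nat) := AfA {
  afa_mx   : option bool -> 'M[R]_n;
  afa_init : 'cV[R]_n;
  afa_acc  : {set 'I_n}
}.

Definition is_afa (R : realFieldType) (n : nat) (M : afa R n) : Prop :=
  (forall (s : option bool) (j : 'I_n), \sum_(i < n) afa_mx M s i j = 1) /\
  \sum_(i < n) afa_init M i ord0 = 1.

Definition afa_final (R : realFieldType) (n : nat) (M : afa R n) (w : word)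
  : 'cV[R]_n :=
  afa_mx M None *m foldl (fun v a => afa_mx M (Some a) *m v) (afa_init M) w.

Definition accept_prob (R : realFieldType) (n : nat) (M : afa R n) (w : word)
  : R :=
  (\sum_(j in afa_acc M) `|afa_final M w j ord0|) /
  (\sum_(j < n) `|afa_final M w j ord0|).

(* Main.v *)
Require Import Defs.
From HB Require Import structures.
From mathcomp Require Import all_boot all_order all_algebra.
From mathcomp Require Import zify ring lra.
Import Order.TTheory GRing.Theory Num.Theory.
Local Open Scope ring_scope.

Definition zN {N : nat} (hN : (1 < N)%N) : 'I_N := Ordinal (ltnW hN).
Definition oneN {N : nat} (hN : (1 < N)%N) : 'I_N := Ordinal hN.

Definition vecg {R : realFieldType} {N} (hN : (1 < N)%N) (g : 'I_N -> R) : 'cV[R]_N :=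
  \col_j (if j == zN hN then 1 - \sum_(k | k != zN hN) g k else g j).

Definition Bmx {R : realFieldType} {N} (hN : (1 < N)%N) (Q : 'I_N -> {poly R}) : 'M[R]_N :=
  \matrix_(i, j) (if j == zN hN then (Q i)`_0 else (Q i)`_j + (Q i)`_0).

Definition Mk {R : realFieldType} {N} (hN : (1 < N)%N) (Q : 'I_N -> {poly R}) : 'M[R]_N :=
  \matrix_(i, j) (if i == zN hN then 1 - \sum_(k | k != zN hN) Bmx hN Q k j
                  else Bmx hN Q i j).

Definition powg {R : realFieldType} {N} (a : R) : 'I_N -> R := fun i => a ^+ i.

Lemma sum_vec {R : realFieldType} {N} (hN : (1 < N)%N) (g : 'I_N -> R) :
  \sum_i vecg hN g i ord0 = 1.
Proof.
rewrite (bigD1 (zN hN)) //= !mxE eqxx.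
rewrite (eq_bigr g); last by move=> i /negbTE Hi; rewrite mxE Hi.
by rewrite subrK.
Qed.

Lemma colsum_Mk {R : realFieldType} {N} (hN : (1 < N)%N) (Q : 'I_N -> {poly R}) j :
  \sum_i Mk hN Q i j = 1.
Proof.
rewrite (bigD1 (zN hN)) //= !mxE eqxx.
rewrite (eq_bigr (fun k => Bmx hN Q k j)); last by move=> i /negbTE Hi; rewrite mxE Hi.
by rewrite subrK.
Qed.

Lemma vecg_ext {R : realFieldType} {N} (hN : (1 < N)%N) (g1 g2 : 'I_N -> R) :
  g1 =1 g2 -> vecg hN g1 = vecg hN g2.
Proof.
move=> H; apply/matrixP => i j; rewrite !mxE H.
by rewrite (eq_bigr g2) // => k _; rewrite H.
Qed.

Lemma B_vec {R : realFieldType} {N} (hN : (1 < N)%N) (Q : 'I_N -> {poly R}) (a : R) i :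
  (size (Q i) <= N)%N ->
  \sum_j Bmx hN Q i j * vecg hN (powg a) j ord0 = (Q i).[a].
Proof.
move=> Hs; rewrite (horner_coef_wide _ Hs).
rewrite (bigD1 (zN hN)) //= [in RHS](bigD1 (zN hN)) //=.
have E : \sum_(j < N | j != zN hN) Bmx hN Q i j * vecg hN (powg a) j ord0 =
   \sum_(j < N | j != zN hN) (Q i)`_j * a ^+ j + 
   (Q i)`_0 * \sum_(j < N | j != zN hN) a ^+ j.
  rewrite mulr_sumr -big_split /=.
  by apply: eq_bigr => j /negbTE Hj; rewrite !mxE Hj mulrDl.
rewrite E !mxE eqxx /= expr0 mulr1 /powg.
set S := \sum_(j < N | j != zN hN) (Q i)`_j * a ^+ j.
set T := \sum_(i0 < N | i0 != zN hN) a ^+ i0.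
rewrite mulrBr mulr1; lra.
Qed.

Lemma Mk_vec {R : realFieldType} {N} (hN : (1 < N)%N) (Q : 'I_N -> {poly R}) (a : R) :
  (forall i, size (Q i) <= N)%N ->
  Mk hN Q *m vecg hN (powg a) = vecg hN (fun i => (Q i).[a]).
Proof.
move=> Hs; apply/matrixP => i j; rewrite (ord1 j) !mxE.
have Hi : forall k, k != zN hN ->
   \sum_j0 Mk hN Q k j0 * vecg hN (powg a) j0 ord0 = (Q k).[a].
  move=> k /negbTE Hk; rewrite -(@B_vec _ _ hN Q a k (Hs k)).
  by apply: eq_bigr => l _; rewrite !mxE Hk.
case: eqP => [->|/eqP Hne]; last by rewrite -Hi.
rewrite (eq_bigr (fun j0 => vecg hN (powg a) j0 ord0 -
     \sum_(k | k != zN hN) Bmx hN Q k j0 * vecg hN (powg a) j0 ord0)); last first.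
  by move=> l _; rewrite !mxE eqxx mulrBl mul1r mulr_suml.
rewrite sumrB sum_vec exchange_big /=; congr (_ - _).
apply: eq_bigr => k Hk; rewrite -Hi //.
by apply: eq_bigr => l _; rewrite !mxE (negbTE Hk).
Qed.

Definition stepn (k : nat) (b : bool) : nat := (3 * k + (1 + b))%N.
Definition encn (w : seq bool) : nat := foldl stepn 0%N w.

Lemma encn_rcons w b : encn (rcons w b) = stepn (encn w) b.
Proof. by rewrite /encn foldl_rcons. Qed.

Lemma encn_inj : injective encn.
Proof.
elim/last_ind => [|w1 b1 IH] w2; case/lastP: w2 => [|w2 b2] //;
  rewrite ?encn_rcons /stepn /=.
- by rewrite /encn /=; lia.
- by rewrite /encn /=; lia.
move=> E.
have Eb : b1 = b2 by move: E; case: b1; case: b2 => /=; lia.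
subst b2; congr rcons; apply: IH; move: E; lia.
Qed.

Definition stepP {R : realFieldType} (b : bool) : {poly R} :=
  (3%:R)%:P * 'X + ((1 + b)%N%:R)%:P.

Lemma size_stepP {R : realFieldType} b : (size (@stepP R b) <= 2)%N.
Proof.
rewrite /stepP size_MXaddC; case: ifP => // _.
by rewrite ltnS size_polyC leq_b1.
Qed.

Lemma stepP_eval {R : realFieldType} b (k : nat) :
  (@stepP R b).[k%:R] = (stepn k b)%:R.
Proof.
rewrite /stepP !hornerE.
have -> : (stepn k b)%:R = (addn (muln 3 k) (addn 1 b))%:R :> R by [].
rewrite !natrD; ring.
Qed.

Definition Qs {R : realFieldType} {N} (b : bool) : 'I_N -> {poly R} :=
  fun i => stepP b ^+ i.

Lemma size_Qs {R : realFieldType} {N} b (i : 'I_N) : (size (@Qs R N b i) <= N)%N.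
Proof.
apply: leq_trans (size_poly_exp_leq _ _) _.
have := @size_stepP R b; have := ltn_ord i.
case: (size (stepP b)) => [|[|[|]]] //= H1 H2; rewrite ?mul0n ?mul1n //; lia.
Qed.

Lemma run_inv {R : realFieldType} {N} (hN : (1 < N)%N) (w : seq bool) (k : nat) :
  foldl (fun v b => Mk hN (@Qs R N b) *m v) (vecg hN (powg (k%:R))) w =
  vecg hN (powg ((foldl stepn k w)%:R)).
Proof.
elim: w k => [|b w IH] k //=.
rewrite Mk_vec; last by move=> i; apply: size_Qs.
rewrite -IH; congr foldl; apply: vecg_ext => i.
by rewrite /Qs horner_exp stepP_eval.
Qed.

Definition Qf {R : realFieldType} {N} (hN : (1 < N)%N) (P : {poly R}) : 'I_N -> {poly R} :=
  fun i => if i == oneN hN then P else 0.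

Definition mkAfa {R : realFieldType} {N} (hN : (1 < N)%N) (P : {poly R}) : afa R N :=
  AfA (fun s => match s with Some b => Mk hN (Qs b) | None => Mk hN (Qf hN P) end)
      (vecg hN (powg 0)) [set oneN hN].

Lemma one_neq_z {N} (hN : (1 < N)%N) : oneN hN != zN hN.
Proof. by []. Qed.

Lemma final_eq {R : realFieldType} {N} (hN : (1 < N)%N) (P : {poly R}) w :
  (size P <= N)%N ->
  afa_final (mkAfa hN P) w =
  vecg hN (fun i => if i == oneN hN then P.[(encn w)%:R] else 0).
Proof.
move=> HP; rewrite /afa_final /=.
have -> : (0 : R) = (0%N)%:R by rewrite mulr0n.
rewrite run_inv Mk_vec; last by move=> i; rewrite /Qf; case: ifP; rewrite ?size_poly0.
by apply: vecg_ext => i; rewrite /Qf; case: ifP; rewrite ?horner0.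
Qed.

Lemma prob_eq {R : realFieldType} {N} (hN : (1 < N)%N) (p : R) :
  let v := vecg hN (fun i => if i == oneN hN then p else 0) in
  (\sum_(j in [set oneN hN]) `|v j ord0|) / (\sum_(j < N) `|v j ord0|) =
  `|p| / (`|1 - p| + `|p|).
Proof.
move=> v.
have Hs : \sum_(k | k != zN hN) (if k == oneN hN then p else 0) = p.
  rewrite (bigD1 (oneN hN)) ?one_neq_z //= ?eqxx big1 ?addr0 //.
  by move=> k /andP [_ /negbTE ->].
rewrite big_set1 (bigD1 (zN hN)) //= (bigD1 (oneN hN)) ?one_neq_z //=.
rewrite big1 ?addr0; last first.
  move=> k /andP [Hk1 Hk2]; rewrite /v mxE (negbTE Hk1) (negbTE Hk2).
  by rewrite normr0.
by rewrite /v !mxE !eqxx (negbTE (one_neq_z hN)) Hs.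
Qed.

Lemma mkAfa_ok {R : realFieldType} {N} (hN : (1 < N)%N) (P : {poly R}) :
  is_afa (mkAfa hN P).
Proof.
split; last exact: sum_vec.
by move=> [b|] j; rewrite colsum_Mk.
Qed.

Theorem mainTheorem12 (R : realFieldType) (x : seq bool) (Y : seq (seq bool)) :
  uniq Y -> Y != [::] -> x \notin Y ->
  exists M : afa R (2 ^ size Y)%N,
    is_afa M /\ accept_prob M x = 1 /\
    (forall y, y \in Y -> accept_prob M y = 0).
Proof.
move=> uY nY xY.
have hN : (1 < 2 ^ size Y)%N.
  by rewrite -{1}(expn0 2) ltn_exp2l // lt0n size_eq0.
pose e (w : seq bool) : R := (encn w)%:R.
pose c := \prod_(y <- Y) (e x - e y).
pose P := c^-1 *: \prod_(y <- Y) ('X - (e y)%:P).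
have HP : (size P <= 2 ^ size Y)%N.
  apply: leq_trans (size_scale_leq _ _) _.
  by rewrite size_prod_XsubC ltn_expl.
have Hc : c != 0.
  rewrite prodf_seq_neq0; apply/allP => y Hy /=.
  rewrite subr_eq0 eqr_nat; apply/eqP => E.
  by move/encn_inj: E => E; subst y; rewrite Hy in xY.
have PE : forall w, P.[e w] = c^-1 * \prod_(y <- Y) (e w - e y).
  by move=> w; rewrite hornerZ horner_prod; congr (_ * _);
     apply: eq_bigr => y _; rewrite hornerXsubC.
exists (mkAfa hN P); split; first exact: mkAfa_ok.
split.
  rewrite /accept_prob final_eq // prob_eq.
  have -> : P.[(encn x)%:R] = 1 by rewrite (PE x) mulVf.
  by rewrite subrr normr0 add0r normr1 divr1.
move=> y Hy; rewrite /accept_prob final_eq // prob_eq.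
have -> : P.[(encn y)%:R] = 0.
  rewrite (PE y); apply/eqP; rewrite mulf_eq0; apply/orP; right.
  by rewrite prodf_seq_eq0; apply/hasP; exists y => //=; rewrite subrr.
by rewrite normr0 mul0r.
Qed.
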